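(* Let $R$ be a commutative ring and $\mathscr{M}$ a $\mathcal{B}$-diagram of $R$-modules such that $\mathrm{im}(\mathscr{M}(\mho_\sigma))\subseteq\ker(\mathscr{M}(\Omega_\sigma))$ for every vertex $\sigma$. If $0\ne m\in\mathscr{M}(\emptyset)$, then there exists a ray $(\sigma^i)$ in $\mathcal{B}$ such that exactly one of the following holds: (1) there exists $j\in\mathbb{N}$ with $m\in\widetilde{\mu}_{\le j}\ker(\mathscr{M}(\Omega_{\sigma^j}))\setminus\widetilde{\mu}_{\le j}\,\mathrm{im}(\mathscr{M}(\mho_{\sigma^j}))$; (2) for each $j\in\mathbb{N}$, $m\in\widetilde{\mu}_{\le j}M[j]\setminus\widetilde{\mu}_{\le j}0$, and so $m\in\bigcap_{i\in\mathbb{N}}\widetilde{\mu}_{\le i}M[i]\setminus\bigcup_{i\in\mathbb{N}}\widetilde{\mu}_{\le i}0$.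
   Context: The quiver $\mathcal{B}$: vertices are finite $0/1$-sequences including the empty sequence $\emptyset$; for each vertex $\sigma$ there are arrows $\Omega_\sigma\colon\sigma\to\sigma1$ and $\mho_\sigma\colon\sigma0\to\sigma$ ($\sigma1,\sigma0$ = $\sigma$ with $1$, resp. $0$, appended). A $\mathcal{B}$-diagram assigns $R$-modules to vertices and $R$-linear maps to arrows. A ray is a sequence $(\sigma^i)_{i\ge0}$ with $\sigma^0=\emptyset$ and $\sigma^i$ equal to $\sigma^{i-1}$ with one symbol appended; $\sigma_i=+$ if that symbol is $1$, $-$ if $0$. Given a ray, $M[i]=\mathscr{M}(\sigma^i)$, and $\mu_i$ ($i\ge1$) is the image of the arrow between $\sigma^{i-1}$ and $\sigma^i$: $\mu_i\colon M[i]\to M[i-1]$ if $\sigma_i=-$, $\mu_i\colon M[i-1]\to M[i]$ if $\sigma_i=+$. $\widetilde{\mu}_i\subseteq M[i]\oplus M[i-1]$ is $\{(x,\mu_i(x))\}$ if $\sigma_i=-$ and $\{(\mu_i(y),y)\}$ if $\sigma_i=+$. For $S\subseteq M[n]$, $\widetilde{\mu}_{\le n}S$ is the set of $m_0\in M[0]$ for which there are $m_i\in M[i]$ ($1\le i\le n$) with $m_n\in S$ and $(m_i,m_{i-1})\in\widetilde{\mu}_i$ for $1\le i\le n$; $\widetilde{\mu}_{\le0}S=S$; $\widetilde{\mu}_{\le i}0=\widetilde{\mu}_{\le i}\{0\}$. *)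

(* Defs.v *)
From HB Require Import structures.
From mathcomp Require Import all_boot all_algebra.
Unset Printing Implicit Defensive.
Import GRing.Theory.
Local Open Scope ring_scope.

(* Vertices of the quiver B are finite 0/1-sequences, encoded as [seq bool]
   (true = 1, false = 0).  sigma1 = rcons sigma true, sigma0 = rcons sigma false. *)

Section Ray.
Variables (R : comPzRingType) (M : seq bool -> lmodType R).
Variable Omega : forall s, {linear M s -> M (rcons s true)}.
Variable Mho : forall s, {linear M (rcons s false) -> M s}.

(* A ray is determined by its sequence of appended symbols d : nat -> bool;
   sigma^0 = [::] and sigma^(i+1) = sigma^i with symbol d i appended. *)
Fixpoint ray_vertex (d : nat -> bool) (i : nat) : seq bool :=
  if i is i'.+1 then rcons (ray_vertex d i') (d i') else [::].

(* The relation mu~ between M(rcons s b) and M(s):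
   b = false (sign -):  {(x, Mho_s x)};  b = true (sign +): {(Omega_s y, y)}. *)
Definition mu_tilde (s : seq bool) (b : bool) : M (rcons s b) -> M s -> Prop :=
  match b return M (rcons s b) -> M s -> Prop with
  | true => fun x y => x = Omega s y
  | false => fun x y => y = Mho s x
  end.

Fixpoint chain (d : nat -> bool) (n : nat) : M (ray_vertex d n) -> M [::] -> Prop :=
  match n return M (ray_vertex d n) -> M [::] -> Prop with
  | 0 => fun x m0 => x = m0
  | n'.+1 => fun x m0 =>
      exists y : M (ray_vertex d n'), @mu_tilde (ray_vertex d n') (d n') x y /\ @chain d n' y m0
  end.

Definition mu_le (d : nat -> bool) (n : nat) (S : M (ray_vertex d n) -> Prop)
  (m0 : M [::]) : Prop :=
  exists x, S x /\ chain d n x m0.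

Definition ker_Omega (s : seq bool) : M s -> Prop := fun x => Omega s x = 0.
Definition im_Mho (s : seq bool) : M s -> Prop :=
  fun x => exists y : M (rcons s false), x = Mho s y.
Definition whole (s : seq bool) : M s -> Prop := fun _ => True.
Definition zero_set (s : seq bool) : M s -> Prop := fun x => x = 0.

End Ray.

Arguments ray_vertex d i : clear implicits.
Arguments mu_tilde {R M} Omega Mho s b.
Arguments chain {R M} Omega Mho d n.
Arguments mu_le {R M} Omega Mho d n S m0.
Arguments ker_Omega {R M} Omega s.
Arguments im_Mho {R M} Mho s.
Arguments whole {R} M s.
Arguments zero_set {R} M s.

(* Main.v *)
Require Import Defs.
From HB Require Import structures.
From mathcomp Require Import all_boot all_algebra.
From Stdlib Require Import Classical ClassicalEpsilon.
Import GRing.Theory.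
Local Open Scope ring_scope.

Definition state {R : comPzRingType} (M : seq bool -> lmodType R) :=
  {s : seq bool & M s -> M [::] -> Prop}.

Definition pick {R : comPzRingType} {M : seq bool -> lmodType R}
  (Mho : forall s, {linear M (rcons s false) -> M s}) (m : M [::])
  (st : state M) : bool :=
  if excluded_middle_informative
       (exists x, im_Mho Mho (projT1 st) x /\ projT2 st x m) then false else true.

Definition step {R : comPzRingType} {M : seq bool -> lmodType R}
  (Omega : forall s, {linear M s -> M (rcons s true)})
  (Mho : forall s, {linear M (rcons s false) -> M s}) (m : M [::])
  (st : state M) : state M :=
  existT _ (rcons (projT1 st) (pick Mho m st))
    (fun x m0 => exists y, mu_tilde Omega Mho (projT1 st) (pick Mho m st) x y
                           /\ projT2 st y m0).

Lemma step_eq {R : comPzRingType} {M : seq bool -> lmodType R}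
  (Omega : forall s, {linear M s -> M (rcons s true)})
  (Mho : forall s, {linear M (rcons s false) -> M s}) (m : M [::])
  (st : state M) s Rel :
  st = existT _ s Rel ->
  step Omega Mho m st = existT _ (rcons s (pick Mho m st))
    (fun x m0 => exists y, mu_tilde Omega Mho s (pick Mho m st) x y /\ Rel y m0).
Proof. by move->. Qed.

Section L.
Context {R : comPzRingType} {M : seq bool -> lmodType R}
  (Omega : forall s, {linear M s -> M (rcons s true)})
  (Mho : forall s, {linear M (rcons s false) -> M s}).

Lemma T1 s (b : bool) : b = true -> forall y : M s,
  exists x : M (rcons s b), mu_tilde Omega Mho s b x y /\ (Omega s y = 0 -> x = 0).
Proof. move=> Hb; subst b => y; exists (Omega s y); split => //. Qed.

Lemma T2 s (b : bool) : b = true -> forall (x : M (rcons s b)) (y : M s),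
  mu_tilde Omega Mho s b x y -> x = 0 -> Omega s y = 0.
Proof. move=> Hb; subst b => x y /= -> ->. by []. Qed.

Lemma F1 s (b : bool) : b = false -> forall (y0 : M (rcons s false)) (x0 : M s),
  x0 = Mho s y0 -> exists x : M (rcons s b), mu_tilde Omega Mho s b x x0.
Proof. move=> Hb; subst b => y0 x0 e; by exists y0. Qed.

Lemma F2 s (b : bool) : b = false -> forall (x : M (rcons s b)) (y : M s),
  mu_tilde Omega Mho s b x y -> x = 0 -> y = 0.
Proof. move=> Hb; subst b => x y /= -> ->; exact: raddf0. Qed.
End L.

Theorem lemma5p12 (R : comPzRingType) (M : seq bool -> lmodType R)
  (Omega : forall s, {linear M s -> M (rcons s true)})
  (Mho : forall s, {linear M (rcons s false) -> M s})
  (hcomplex : forall (s : seq bool) (x : M (rcons s false)),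
      Omega s (Mho s x) = 0)
  (m : M [::]) (hm : m != 0) :
  exists d : nat -> bool,
    let P1 := exists j : nat,
        mu_le Omega Mho d j (ker_Omega Omega (ray_vertex d j)) m /\
        ~ mu_le Omega Mho d j (im_Mho Mho (ray_vertex d j)) m in
    let P2 :=
        (forall j : nat,
          mu_le Omega Mho d j (whole M (ray_vertex d j)) m /\
          ~ mu_le Omega Mho d j (zero_set M (ray_vertex d j)) m) /\
        ((forall i : nat, mu_le Omega Mho d i (whole M (ray_vertex d i)) m) /\
         ~ (exists i : nat, mu_le Omega Mho d i (zero_set M (ray_vertex d i)) m)) in
    (P1 /\ ~ P2) \/ (~ P1 /\ P2).
Proof.
pose st n := iter n (step Omega Mho m) (existT _ [::] (fun x m0 => x = m0)).
pose d n := pick Mho m (st n).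
have Hst : forall n, st n = existT _ (ray_vertex d n) (chain Omega Mho d n).
  elim => [|n IH] //.
  change (step Omega Mho m (st n) = existT _ (rcons (ray_vertex d n) (pick Mho m (st n)))
    (fun x m0 => exists y, mu_tilde Omega Mho (ray_vertex d n) (pick Mho m (st n)) x y
       /\ chain Omega Mho d n y m0)).
  exact: step_eq IH.
have Hd : forall n, if d n then ~ mu_le Omega Mho d n (im_Mho Mho (ray_vertex d n)) m
                    else mu_le Omega Mho d n (im_Mho Mho (ray_vertex d n)) m.
  move=> n.
  have E : d n = pick Mho m (st n) := erefl.
  rewrite E Hst /pick /=.
  by case: excluded_middle_informative.
exists d; cbv zeta.
case: (classic (exists j, mu_le Omega Mho d j (ker_Omega Omega (ray_vertex d j)) m /\
        ~ mu_le Omega Mho d j (im_Mho Mho (ray_vertex d j)) m)) => [[j [HK HIm]]|HN].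
  left; split; first by exists j.
  move=> [H _]; apply: (H j.+1).2.
  case E: (d j) (Hd j) => HI; last by case: (HIm HI).
  case: HK => y [Hy0 Hc].
  have [x [Hx Hx0]] := T1 Omega Mho _ _ E y.
  exists x; split; first exact: Hx0 Hy0.
  by exists y; split.
have inv : forall j, mu_le Omega Mho d j (whole M (ray_vertex d j)) m /\
          ~ mu_le Omega Mho d j (zero_set M (ray_vertex d j)) m.
  elim => [|j [HA HZ]].
    split; first by exists m.
    move=> [x [Hx0 Hxm]]; move: hm; rewrite -Hxm Hx0 eqxx //.
  case E: (d j) (Hd j) => HI.
    have NK : ~ mu_le Omega Mho d j (ker_Omega Omega (ray_vertex d j)) m.
      by move=> HK; apply: HN; exists j.
    split.
      case: HA => y [_ Hy].
      have [x [Hx _]] := T1 Omega Mho _ _ E y.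
      exists x; split => //; by exists y; split.
    move=> [x [Hx0 [y [Hxy Hy]]]]; apply: NK.
    exists y; split => //; rewrite /ker_Omega; exact: T2 Omega Mho _ _ E _ _ Hxy Hx0.
  split.
    case: HI => x0 [[y0 e] Hc].
    have [x Hx] := F1 Omega Mho _ _ E _ _ e.
    exists x; split => //; by exists x0; split.
  move=> [x [Hx0 [y [Hxy Hy]]]]; apply: HZ.
  exists y; split => //; rewrite /zero_set; exact: F2 Omega Mho _ _ E _ _ Hxy Hx0.
right; split => //.
split => //; split; first by move=> i; case: (inv i).
by move=> [i Hi]; case: (inv i) => _; apply.
Qed.
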